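(* On the open subset of $\mathbb{R}^4$ with coordinates $(u_1,u_2,p_{u_1},p_{u_2})$ where $u_1\neq u_2$, equipped with the canonical Poisson bracket $\{u_1,u_2\}=\{p_{u_1},p_{u_2}\}=0$, $\{u_i,p_{u_j}\}=\delta_{ij}$, define $$a=\frac{p_{u_1}^2}{u_1-u_2}+\frac{p_{u_2}^2}{u_2-u_1}-u_1^2-u_1u_2-u_2^2,\qquad b=\frac{u_2p_{u_1}^2}{u_2-u_1}+\frac{u_1p_{u_2}^2}{u_1-u_2}+(u_1+u_2)u_1u_2,$$ (so that $p_{u_i}^2=u_i^3+au_i+b$ for $i=1,2$), and, with $\beta=\dfrac{p_{u_1}-p_{u_2}}{u_1-u_2}$, $$x_3=\beta^2-u_1-u_2,\qquad y_3=p_{u_1}+\beta\,(x_3-u_1).$$ Then these four functions satisfy $$\{a,b\}=0,\quad \{a,x_3\}=0,\quad \{a,y_3\}=0,\quad \{b,x_3\}=2y_3,\quad \{b,y_3\}=3x_3^2+a,\quad \{x_3,y_3\}=-1,$$ together with the relation $y_3^2=x_3^3+ax_3+b$. In particular, the Hamiltonian system with Hamiltonian $H=a$ is superintegrable, with first integrals $a,b,x_3,y_3$.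
   Context: The Poisson bracket is $\{f,g\}=\sum_{i=1}^2\left(\frac{\partial f}{\partial u_i}\frac{\partial g}{\partial p_{u_i}}-\frac{\partial f}{\partial p_{u_i}}\frac{\partial g}{\partial u_i}\right)$. Geometrically, $(x_3,y_3)$ is the third intersection point of the cubic $y^2=x^3+ax+b$ with the line through $(u_1,p_{u_1})$ and $(u_2,p_{u_2})$. *)

(* Defs.v *)
From Stdlib Require Import Reals ClassicalEpsilon.
Open Scope R_scope.

(* A function on R^4 with coordinates (u1, u2, p1, p2) = (u_1, u_2, p_{u_1}, p_{u_2}). *)
Definition fun4 := R -> R -> R -> R -> R.

(* The derivative of g at x (the unique l with derivable_pt_lim g x l, chosen
   by classical choice; it is only meaningful where g is differentiable). *)
Definition deriv (g : R -> R) (x : R) : R :=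
  epsilon (inhabits 0) (fun l => derivable_pt_lim g x l).

Definition d_u1 (f : fun4) : fun4 := fun u1 u2 p1 p2 => deriv (fun t => f t u2 p1 p2) u1.
Definition d_u2 (f : fun4) : fun4 := fun u1 u2 p1 p2 => deriv (fun t => f u1 t p1 p2) u2.
Definition d_p1 (f : fun4) : fun4 := fun u1 u2 p1 p2 => deriv (fun t => f u1 u2 t p2) p1.
Definition d_p2 (f : fun4) : fun4 := fun u1 u2 p1 p2 => deriv (fun t => f u1 u2 p1 t) p2.

Definition PB (f g : fun4) : fun4 := fun u1 u2 p1 p2 =>
  d_u1 f u1 u2 p1 p2 * d_p1 g u1 u2 p1 p2 - d_p1 f u1 u2 p1 p2 * d_u1 g u1 u2 p1 p2
  + (d_u2 f u1 u2 p1 p2 * d_p2 g u1 u2 p1 p2 - d_p2 f u1 u2 p1 p2 * d_u2 g u1 u2 p1 p2).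

Definition fa : fun4 := fun u1 u2 p1 p2 =>
  p1 ^ 2 / (u1 - u2) + p2 ^ 2 / (u2 - u1) - u1 ^ 2 - u1 * u2 - u2 ^ 2.

Definition fb : fun4 := fun u1 u2 p1 p2 =>
  u2 * p1 ^ 2 / (u2 - u1) + u1 * p2 ^ 2 / (u1 - u2) + (u1 + u2) * u1 * u2.

Definition beta : fun4 := fun u1 u2 p1 p2 => (p1 - p2) / (u1 - u2).

Definition x3 : fun4 := fun u1 u2 p1 p2 => (beta u1 u2 p1 p2) ^ 2 - u1 - u2.

Definition y3 : fun4 := fun u1 u2 p1 p2 =>
  p1 + beta u1 u2 p1 p2 * (x3 u1 u2 p1 p2 - u1).

(* Main.v *)
Require Import Defs.
From Stdlib Require Import Reals Lra ClassicalEpsilon.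
From Coquelicot Require Import Coquelicot.
Open Scope R_scope.

Lemma deriv_ok g x l : is_derive g x l -> deriv g x = l.
Proof.
  intro H. apply is_derive_Reals in H. unfold deriv.
  pose proof (epsilon_spec (inhabits 0) (fun l => derivable_pt_lim g x l) (ex_intro _ l H)) as H'.
  eapply uniqueness_limite; eauto.
Qed.

Ltac dcomp :=
  match goal with |- context[deriv ?g ?x] =>
    let l := fresh "l" in evar (l : R);
    let H := fresh "H" in
    assert (H : is_derive g x l) by (subst l; auto_derive; [repeat split; try lra | reflexivity]);
    rewrite (deriv_ok g x l H); subst l; clear H
  end.


Theorem proposition2 : forall u1 u2 p1 p2 : R, u1 <> u2 ->
  PB fa fb u1 u2 p1 p2 = 0 /\
  PB fa x3 u1 u2 p1 p2 = 0 /\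
  PB fa y3 u1 u2 p1 p2 = 0 /\
  PB fb x3 u1 u2 p1 p2 = 2 * y3 u1 u2 p1 p2 /\
  PB fb y3 u1 u2 p1 p2 = 3 * (x3 u1 u2 p1 p2) ^ 2 + fa u1 u2 p1 p2 /\
  PB x3 y3 u1 u2 p1 p2 = -1 /\
  (y3 u1 u2 p1 p2) ^ 2 = (x3 u1 u2 p1 p2) ^ 3 + fa u1 u2 p1 p2 * x3 u1 u2 p1 p2 + fb u1 u2 p1 p2.
Proof.
  intros u1 u2 p1 p2 Hu.
  assert (Hd : u1 - u2 <> 0) by lra.
  assert (Hd' : u2 - u1 <> 0) by lra.
  unfold PB, d_u1, d_u2, d_p1, d_p2, fa, fb, y3, x3, beta.
  repeat dcomp.
  repeat split; field; auto.
Qed.
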